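(* Let $\mathcal{K}\subseteq\mathbb{R}^n$ be a proper convex cone with a $\nu$-LHSCB $f$ with gradient $g$, let $\mathbf{w}\in(\mathcal{K}^* )^\circ$, and let $\mathbf{x}_0\in\mathcal{K}^\circ$ with $\mathbf{w}^\top\mathbf{x}_0=1$. Let $\mathbf{e}=-\frac{g(\mathbf{x}_0)}{\nu}$ and consider the pair of problems \[\min\{\nu\mathbf{w}^\top\mathbf{x}:\ \mathbf{e}^\top\mathbf{x}=1,\ \mathbf{x}\in\mathcal{K}\},\qquad \max\{y:\ y\mathbf{e}+\mathbf{s}=\nu\mathbf{w},\ \mathbf{s}\in\mathcal{K}^*,\ y\in\mathbb{R}\}.\] Then strong duality holds between these problems with attained optimal solutions, the optimal value is positive, and there are strictly feasible solutions $(\mathbf{x},y,\mathbf{s})$ (i.e. $\mathbf{x}\in\mathcal{K}^\circ$, $\mathbf{e}^\top\mathbf{x}=1$, $\mathbf{s}\in(\mathcal{K}^* )^\circ$, $y\mathbf{e}+\mathbf{s}=\nu\mathbf{w}$) with $y=0$.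
   Context: $\mathcal{K}\subseteq\mathbb{R}^n$ is a proper (closed, convex, pointed, full-dimensional) cone with interior $\mathcal{K}^\circ$ and dual cone $\mathcal{K}^*=\{\mathbf{s}:\mathbf{s}^\top\mathbf{x}\ge0\ \forall\mathbf{x}\in\mathcal{K}\}$. A $\nu$-LHSCB for $\mathcal{K}$ is a strictly convex, three times differentiable $f:\mathcal{K}^\circ\to\mathbb{R}$ with $f(\mathbf{x})\to\infty$ at the boundary of $\mathcal{K}$, $|D^3f(\mathbf{x})[\mathbf{h},\mathbf{h},\mathbf{h}]|\le 2\,(D^2f(\mathbf{x})[\mathbf{h},\mathbf{h}])^{3/2}$, $\nu=\sup_{\mathbf{x}\in\mathcal{K}^\circ}g(\mathbf{x})^\top H(\mathbf{x})^{-1}g(\mathbf{x})<\infty$ ($H$ the Hessian), and $f(t\mathbf{x})=f(\mathbf{x})-\nu\ln t$ for $t>0$. *)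

(* Defs.v *)
From HB Require Import structures.
From mathcomp Require Import all_boot all_order all_algebra.
From mathcomp Require Import all_classical all_reals all_analysis.
Set Implicit Arguments. Unset Strict Implicit. Unset Printing Implicit Defensive.
Import Order.TTheory GRing.Theory Num.Theory.
Import numFieldNormedType.Exports.
Local Open Scope classical_set_scope.
Local Open Scope ring_scope.

Section Defs.
Variables (R : realType) (n : nat).
Notation vec := 'rV[R]_n.

Definition dotp (s x : vec) : R := \sum_(i < n) s 0 i * x 0 i.

Definition basisv (i : 'I_n) : vec := delta_mx 0 i.

Definition is_cone (K : set vec) := forall t x, 0 <= t -> K x -> K (t *: x).

Definition is_convex_set (K : set vec) :=
  forall x y t, K x -> K y -> 0 <= t <= 1 -> K (t *: x + (1 - t) *: y).

Definition proper_cone (K : set vec) :=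
  [/\ is_cone K, closed K, is_convex_set K,
      (forall x, K x -> K (- x) -> x = 0) & interior K !=set0].

Definition dual_cone (K : set vec) : set vec :=
  [set s | forall x, K x -> 0 <= dotp s x].

Definition D1 (f : vec -> R) (x h : vec) : R := 'D_h f x.
Definition D2 (f : vec -> R) (x h k : vec) : R := 'D_k (fun y => 'D_h f y) x.
Definition D3 (f : vec -> R) (x h k l : vec) : R :=
  'D_l (fun y => 'D_k (fun z => 'D_h f z) y) x.

Definition grad (f : vec -> R) (x : vec) : vec := \row_i D1 f x (basisv i).
Definition hess (f : vec -> R) (x : vec) : 'M[R]_n :=
  \matrix_(i, j) D2 f x (basisv i) (basisv j).

(** f is three times (Frechet) differentiable on the open set U: f, its
    directional derivatives and their directional derivatives are all
    differentiable at every point of U (in finite dimension this is exactly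
    three-times differentiability). *)
Definition thrice_differentiable (f : vec -> R) (U : set vec) :=
  forall x, U x ->
  [/\ differentiable f x,
      (forall h, differentiable (fun y => 'D_h f y) x) &
      (forall h k, differentiable (fun y => 'D_k (fun z => 'D_h f z) y) x)].

Definition nu_set (K : set vec) (f : vec -> R) : set R :=
  [set (grad f x *m invmx (hess f x) *m (grad f x)^T) 0 0 | x in interior K].

Definition is_LHSCB (K : set vec) (f : vec -> R) (nu : R) :=
  [/\ thrice_differentiable f (interior K) /\
      (forall x y t, interior K x -> interior K y -> x != y -> 0 < t < 1 ->
         f (t *: x + (1 - t) *: y) < t * f x + (1 - t) * f y),
      (forall xb, K xb -> ~ interior K xb ->
         f x @[x --> within (interior K) (nbhs xb)] --> +oo),
      (forall x h, interior K x ->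
         `|D3 f x h h h| <= 2 * powR (D2 f x h h) (3%:R / 2%:R)),
      (* nu = sup_{x in int K} g(x)^T H(x)^{-1} g(x) < oo
         (the Hessian being invertible so that H^{-1} makes sense) *)
      [/\ (forall x, interior K x -> hess f x \in unitmx),
          has_ubound (nu_set K f) &
          nu = sup (nu_set K f)] &
      (forall x t, interior K x -> 0 < t -> f (t *: x) = f x - nu * ln t)].

End Defs.

(* Main.v *)
Require Import Defs.
From HB Require Import structures.
From mathcomp Require Import all_boot all_order all_algebra.
From mathcomp Require Import all_classical all_reals all_analysis.
From mathcomp Require Import ring lra.
Import Order.TTheory GRing.Theory Num.Theory.
Import numFieldNormedType.Exports.
Local Open Scope classical_set_scope.
Local Open Scope ring_scope.

Lemma Dhom (R : realType) n (f : 'rV[R]_n -> R) (nu : R) (x0 : 'rV[R]_n) :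
  (forall t, 0 < t -> f (t *: x0) = f x0 - nu * ln t) -> 'D_x0 f x0 = - nu.
Proof.
move=> hom.
pose psi : R -> R := (- nu) \*: (@ln R).
have hd : is_derive (1:R) (1:R) psi (- nu *: (1:R)^-1).
  apply: is_deriveZ; exact: is_derive1_ln.
have c1 := @ex_derive _ _ _ _ _ _ _ hd.
have c2 : 'D_1 psi 1 = - nu by rewrite derive_val invr1 scaler1.
rewrite /derive.
apply: cvg_lim => //.
have -> : (- nu) = 'D_1 psi 1 by [].
apply: cvg_trans c1.
apply: near_eq_cvg.
have : \forall h \near (0:R)^', -1 < h.
  rewrite near_withinE; apply: filterS (@Nlt_nbhsl R 0 1 _) => [h hh _|].
    by rewrite ltrNl.
  by rewrite oppr0 ltr01.
apply: filterS => h hh /=.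
rewrite /psi /= -{2}[x0]scale1r -scalerDl hom; last by rewrite -ltrBlDr sub0r.
rewrite ln1 scaler0 subr0 /GRing.scale /= mulr1; congr (_ * _); ring.
Qed.


Lemma graddot (R : realType) n (f : 'rV[R]_n -> R) (x v : 'rV[R]_n) :
  differentiable f x -> dotp (grad f x) v = 'D_v f x.
Proof.
move=> df; rewrite deriveE // {2}(row_sum_delta v) linear_sum /dotp.
apply: eq_bigr => i _; rewrite linearZ /= mxE /D1 deriveE // /basisv.
by rewrite /GRing.scale /= mulrC.
Qed.


Section dot.
Variables (R : realType) (n : nat).
Implicit Types (s x y : 'rV[R]_n) (a : R).

Lemma dotpDl s y x : dotp (s + y) x = dotp s x + dotp y x.
Proof. by rewrite /dotp -big_split; apply: eq_bigr => i _; rewrite mxE mulrDl. Qed.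
Lemma dotpZl a s x : dotp (a *: s) x = a * dotp s x.
Proof. by rewrite /dotp mulr_sumr; apply: eq_bigr => i _; rewrite mxE mulrA. Qed.
Lemma dotpNl s x : dotp (- s) x = - dotp s x.
Proof. by rewrite -scaleN1r dotpZl mulN1r. Qed.
Lemma dotpZr a s x : dotp s (a *: x) = a * dotp s x.
Proof. by rewrite /dotp mulr_sumr; apply: eq_bigr => i _; rewrite mxE mulrCA. Qed.
Lemma dotpbasis i x : dotp (@basisv R n i) x = x 0 i.
Proof.
rewrite /dotp (bigD1 i) //= big1 => [|j ji]; first by rewrite mxE !eqxx mul1r addr0.
by rewrite mxE eqxx /= (negbTE ji) mul0r.
Qed.
Lemma dotp_cont s : continuous (dotp s).
Proof.
rewrite /dotp; elim: (index_enum _) => [|i r IH].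
  by under [X in continuous X]funext do rewrite big_nil; exact: cst_continuous.
under [X in continuous X]funext do rewrite big_cons.
move=> x; apply: (@continuousD _ _ _ (fun x => s 0 i * x 0 i)); last exact: IH.
apply: (@continuousM _ _ (fun=> s 0 i) (fun x => x 0 i)).
  exact: cst_continuous.
exact: coord_continuous.
Qed.
End dot.

Lemma int_scale (R : realType) n (K : set 'rV[R]_n) x t :
  is_cone K -> interior K x -> 0 < t -> interior K (t *: x).
Proof.
move=> cK ix t0; have := nbhsZ (lt0r_neq0 t0) ix.
by apply: filterS => y [z Kz <-]; exact: cK (ltW t0) Kz.
Qed.

Lemma dual_is_cone (R : realType) n (K : set 'rV[R]_n) : is_cone (dual_cone K).
Proof. by move=> t s t0 Ks x Kx; rewrite dotpZl mulr_ge0 //; exact: Ks. Qed.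


Lemma norm_basis (R : realType) n (i : 'I_n) : `|@basisv R n i| <= 1.
Proof.
rewrite [leLHS]/Num.norm /= mx_normrE; apply: bigmax_le => // -[a b] _ /=.
by rewrite /basisv mxE; case: (_ && _); rewrite ?normr1 ?normr0.
Qed.

Lemma wbound (R : realType) n (K : set 'rV[R]_n) w :
  interior (dual_cone K) w ->
  exists2 c, 0 < c & forall x, K x -> forall i, c * `|x 0 i| <= dotp w x.
Proof.
move=> /nbhs_ballP [eps /= eps0 hb]; exists (eps / 2); first by lra.
move=> x Kx i.
have hu a : `|a| <= eps / 2 -> dual_cone K (w - a *: @basisv R n i).
  move=> ha; apply: hb; rewrite -ball_normE /= opprB addrC subrK.
  rewrite normrZ; apply: (le_lt_trans (y := eps / 2 * 1)).
    by apply: ler_pM => //; exact: norm_basis.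
  lra.
have h1 := hu (eps / 2) _ x Kx; have h2 := hu (- (eps / 2)) _ x Kx.
move: h1 h2; rewrite !dotpDl !dotpNl !dotpZl !dotpbasis normrN.
have e2 : `|eps / 2| <= eps / 2 by rewrite ger0_norm //; lra.
move=> /(_ e2) h1 /(_ e2) h2.
have [h|h] := lerP 0 (x 0 i).
  rewrite ger0_norm //; lra.
rewrite ltr0_norm //; lra.
Qed.


Lemma dotp0r (R : realType) n (s : 'rV[R]_n) : dotp s 0 = 0.
Proof. by rewrite /dotp big1 // => i _; rewrite mxE mulr0. Qed.

Theorem lemma3p2 (R : realType) (n : nat) (K : set 'rV[R]_n)
  (f : 'rV[R]_n -> R) (nu : R) (w x0 : 'rV[R]_n) :
  proper_cone K -> is_LHSCB K f nu ->
  interior (dual_cone K) w -> interior K x0 -> dotp w x0 = 1 ->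
  let e := - (nu^-1 *: grad f x0) in
  (* strong duality, both optima attained, positive optimal value *)
  (exists (xs : 'rV[R]_n) (ys : R) (ss : 'rV[R]_n),
     [/\ K xs /\ dotp e xs = 1,
         ys *: e + ss = nu *: w /\ dual_cone K ss,
         (forall x, K x -> dotp e x = 1 -> nu * dotp w xs <= nu * dotp w x),
         (forall y s, y *: e + s = nu *: w -> dual_cone K s -> y <= ys) &
         nu * dotp w xs = ys /\
         0 < ys]) /\
  (* strictly feasible primal and dual solutions with y = 0 *)
  (exists (x : 'rV[R]_n) (s : 'rV[R]_n),
     [/\ interior K x, dotp e x = 1,
         interior (dual_cone K) s & 0 *: e + s = nu *: w]).
Proof.
move=> [cK clK cvK ptK intK] [[td sc] bar _ _ hom] wint x0int wx0 e.
have x0K : K x0 := interior_subset x0int.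
have x0n0 : x0 != 0.
  by apply/eqP => x00; move: wx0; rewrite x00 dotp0r => /eqP; rewrite eq_sym oner_eq0.
have hom1 t : 0 < t -> f (t *: x0) = f x0 - nu * ln t by move=> t0; exact: hom.
have nupos : 0 < nu.
  have i2 : interior K (2 *: x0) by apply: (@int_scale _ _ _ _ _) => //; lra.
  have ne : x0 != 2 *: x0.
    apply: contra x0n0 => /eqP h; apply/eqP.
    have e1 : 2 *: x0 - 1 *: x0 = x0.
      by rewrite -scalerBl (_ : (2 - 1 : R) = 1) ?scale1r //; lra.
    by rewrite -e1 -h scale1r subrr.
  have t01 : (0 < (2:R)^-1) && ((2:R)^-1 < 1).
    by apply/andP; split; rewrite ?invr_gt0 ?invf_lt1 ?ltr1n.
  have H := sc x0 (2 *: x0) (2^-1) x0int i2 ne t01.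
  rewrite scalerA -{1}[x0]scale1r scalerA -scalerDl in H.
  have e32 : ((2:R)^-1 * 1 + (1 - 2^-1) * 2) = 3/2 by lra.
  rewrite e32 !hom1 in H; [|lra|lra].
  have hl : ln (2 : R) < 2 * ln (3/2).
    rewrite mulr_natl -lnXn; last by lra.
    rewrite ltr_ln ?posrE; [|lra|]; last by rewrite expr2; apply: mulr_gt0; lra.
    rewrite expr2; lra.
  nra.
have [dx0 _ _] := td x0 x0int.
have gx0 : dotp (grad f x0) x0 = - nu by rewrite graddot // (@Dhom _ _ _ _ _ hom1).
have ex0 : dotp e x0 = 1.
  by rewrite /e dotpNl dotpZl gx0 mulrN opprK mulVf // gt_eqF.
have [c c0 hc] := @wbound _ _ _ _ wint.
have wK : dual_cone K w := interior_subset wint.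
have zw x : K x -> dotp w x = 0 -> x = 0.
  move=> Kx wx0'; apply/rowP => i; rewrite mxE; apply/eqP; rewrite -normr_le0.
  by have := hc x Kx i; rewrite wx0' pmulr_rle0.
pose S := [set x | K x /\ dotp w x = 1].
have cS : compact S.
  apply: bounded_closed_compact.
    exists c^-1; split; first by rewrite realE invr_ge0 ltW.
    move=> M hM x [Kx wx] /=; rewrite [leLHS]/Num.norm /= mx_normrE.
    apply: bigmax_le => [|[a b] _ /=].
      by apply: le_trans (ltW hM); rewrite invr_ge0 ltW.
    rewrite ord1; apply: le_trans (ltW hM).
    by rewrite -(ler_pM2l c0) mulfV ?gt_eqF // -wx; exact: hc.
  apply: (closedI clK).
  have := proj1 (continuous_closedP _) (@dotp_cont _ _ w) _ (@closed_eq _ 1).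
  exact.
have S0 : S !=set0 by exists x0.
have [x1 /set_mem [x1K wx1] hmax] :=
  compact_EVT_max S0 cS (continuous_subspaceT (@dotp_cont _ _ e)).
pose M := dotp e x1.
have M1 : 1 <= M by rewrite -ex0; apply: hmax; exact: mem_set.
have M0 : 0 < M by lra.
have key x : K x -> dotp e x <= M * dotp w x.
  move=> Kx; have [wx|wx] := eqVneq (dotp w x) 0.
    by rewrite wx mulr0 (zw x Kx wx) dotp0r.
  have wxp : 0 < dotp w x by rewrite lt_def wx; exact: wK.
  have : S ((dotp w x)^-1 *: x).
    split; first by apply: cK => //; rewrite invr_ge0 ltW.
    by rewrite dotpZr mulVf.
  move/mem_set/hmax; rewrite -/M dotpZr => h.
  by rewrite -[dotp e x](mulVKf wx) [leLHS]mulrC ler_pM2r.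
split; last first.
  exists x0, (nu *: w); split => //.
  - by apply: (@int_scale _ _ _ _ _) => //; exact: dual_is_cone.
  - by rewrite scale0r add0r.
exists (M^-1 *: x1); exists (nu / M); exists (nu *: w - (nu / M) *: e).
split.
- split; first by apply: cK => //; rewrite invr_ge0 ltW.
  by rewrite dotpZr mulVf // gt_eqF.
- split; first by rewrite addrC subrK.
  move=> x Kx; rewrite dotpDl dotpNl !dotpZl subr_ge0.
  have := key x Kx => h.
  apply: le_trans (ler_wpM2l _ h) _; first by rewrite divr_ge0 // ltW.
  by rewrite mulrA divfK // gt_eqF.
- move=> x Kx ex1; apply: ler_wpM2l; first exact: ltW.
  rewrite dotpZr wx1 mulr1 -[dotp w x](mulKf (lt0r_neq0 M0)).
  by rewrite -{1}[M^-1]mulr1 ler_pM2l ?invr_gt0 // -ex1; exact: key.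
- move=> y s heq sK.
  have es : s = nu *: w - y *: e by rewrite -heq addrAC subrr add0r.
  rewrite es in sK.
  have := sK _ x1K; rewrite dotpDl dotpNl !dotpZl wx1 mulr1 subr_ge0 -/M => h.
  rewrite -[y](mulfK (lt0r_neq0 M0)); apply: ler_wpM2r; first by rewrite invr_ge0 ltW.
  exact: h.
- split; last by rewrite divr_gt0.
  by rewrite dotpZr wx1 mulr1.
Qed.
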